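(* Let $k$ be a field of characteristic $p>0$ and $A$ a $k$-vector space of dimension $1$. For every $r\ge0$, $S_{\le r}A\neq\bigoplus_{0\le i\le r}S^iA$.
   Context: $SA=\bigoplus_{n\ge0}S^nA$ is the symmetric algebra of $A$ ($S^0A=k$, $S^nA$ the $n$-th symmetric power, with pure symmetric tensors $a_1\otimes_s\dots\otimes_s a_n$). The linear map $\partial\colon SA\to SA\otimes A$ is given by $\partial(\lambda)=0$ for $\lambda\in S^0A$ and $\partial(a_1\otimes_s\dots\otimes_s a_n)=\sum_{i=1}^n(a_1\otimes_s\dots\otimes_s a_{i-1}\otimes_s a_{i+1}\otimes_s\dots\otimes_s a_n)\otimes a_i$. Iterates: $\partial^0=1_{SA}$ and $\partial^{r+1}:=\partial;(\partial^r\otimes 1_A)\colon SA\to SA\otimes A^{\otimes(r+1)}$. Define $S_{\le r}A:=\ker(\partial^{r+1})\subseteq SA$. *)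

(* Defs.v *)
From HB Require Import structures.
From mathcomp Require Import all_boot all_order all_algebra.
From mathcomp Require Import multinomials.mpoly.
Set Implicit Arguments. Unset Strict Implicit. Unset Printing Implicit Defensive.
Import GRing.Theory.
Local Open Scope ring_scope.

(* Concrete model of the symmetric algebra SA of a finite-dimensional
   k-vector space A: with e_0..e_{d-1} = vbasis {:A},
   SA = k[X_0,...,X_{d-1}], and a \in A is identified with
   sum_i coord_i(a) X_i; the symmetric product is polynomial product. *)
Section SymAlg.
Variables (k : fieldType) (A : vectType k).

Definition dimA : nat := \dim {:A}.

Definition SA := {mpoly k[dimA]}.

Definition symlin (a : A) : SA :=
  \sum_(i < dimA) coord (vbasis {:A}) i a *: 'X_i.

Definition spure n (t : n.-tuple A) : SA := \prod_(a <- t) symlin a.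

Definition in_Sn (n : nat) (f : SA) : Prop :=
  exists s : seq (k * n.-tuple A), f = \sum_(x <- s) x.1 *: spure x.2.

Definition in_Sle_sum (r : nat) (f : SA) : Prop :=
  exists g : 'I_r.+1 -> SA, (forall i : 'I_r.+1, in_Sn i (g i)) /\
                            f = \sum_(i < r.+1) g i.

(* An element of SA (x) A^{(x) m} is represented by its coordinates
   (in SA) along the basis e_{j_1} (x) ... (x) e_{j_m} of A^{(x) m}, i.e. by a
   function (m.-tuple 'I_dimA) -> SA.
   partial f = ∂ f : the coordinate of ∂ f along e_j is the partial
   derivative of f in X_j (this agrees with the defining formula on pure
   symmetric tensors). *)
Definition partial (f : SA) : 'I_dimA -> SA := fun j => mderiv j f.

(* dpow m f t = coordinate of ∂^m f along the basis tensor indexed by t,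
   where ∂^{m+1} = ∂ ; (∂^m (x) 1_A): the head of t is the index of the
   LAST tensor factor (the one produced by the first application of ∂). *)
Fixpoint dpow (m : nat) : SA -> m.-tuple 'I_dimA -> SA :=
  match m return SA -> m.-tuple 'I_dimA -> SA with
  | 0 => fun f _ => f
  | m'.+1 => fun f (t : m'.+1.-tuple 'I_dimA) =>
      @dpow m' (partial f (thead t)) (behead_tuple t)
  end.

(* f \in S_{<= r} A = ker ∂^{r+1} *)
Definition in_Sle (r : nat) (f : SA) : Prop :=
  forall t : (r.+1).-tuple 'I_dimA, @dpow r.+1 f t = 0.

End SymAlg.

(* Main.v *)
Require Import Defs.
From HB Require Import structures.
From mathcomp Require Import all_boot all_order all_algebra.
From mathcomp Require Import multinomials.mpoly.
Local Open Scope ring_scope.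
Import GRing.Theory.

Lemma symlin_homog (k : fieldType) (A : vectType k) (a : A) :
  symlin a \is 1%N.-homog.
Proof.
rewrite /symlin; apply: rpred_sum => i _; apply: rpredZ.
by rewrite dhomogX; apply/eqP; apply: mdeg1.
Qed.

Lemma prod_homog (k : fieldType) (A : vectType k) (s : seq A) :
  \prod_(a <- s) symlin a \is (size s).-homog.
Proof.
elim: s => [|a s IH]; first by rewrite big_nil dhomog1.
by rewrite big_cons /= -add1n; apply: dhomogM; [apply: symlin_homog | exact: IH].
Qed.

Lemma Sn_homog (k : fieldType) (A : vectType k) (i : nat) (f : SA A) :
  in_Sn i f -> f \is i.-homog.
Proof.
case=> s ->; apply: rpred_sum => x _; apply: rpredZ.
by rewrite /spure; have := @prod_homog k A x.2; rewrite size_tuple.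
Qed.

Lemma dpow0 (k : fieldType) (A : vectType k) (m : nat) t :
  @dpow k A m 0 t = 0.
Proof.
elim: m t => [|m IH] t //=.
by rewrite /partial mderiv0 IH.
Qed.

Theorem proposition7p4 (k : fieldType) (p : nat) (hp : p \in [pchar k])
  (A : vectType k) (hA : \dim {:A} = 1%N) (r : nat) :
  ~ (forall f : SA A, in_Sle r f <-> in_Sle_sum r f).
Proof.
have p0 : p%:R = 0 :> k by apply/eqP; case/andP: hp.
have pp : prime p by case/andP: hp.
have pgt0 : (0 < p)%N by apply: prime_gt0.
have hdim : dimA A = 1%N by [].
pose i0 : 'I_(dimA A) := cast_ord (esym hdim) ord0.
pose N := (p * r.+1)%N.
pose m := (U_(i0) *+ N)%MM.
pose f : SA A := 'X_[m].
move=> /(_ f) [H _].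
have Hf : in_Sle r f.
  move=> t /=; rewrite /partial /f mderivX mulmnE /N natrM natrM p0.
  by rewrite mul0r mulr0 scale0r dpow0.
case: (H Hf) => g [Hg Hsum].
have := congr1 (mcoeff m) Hsum.
rewrite mcoeffX eqxx raddf_sum /= big1 => [/eqP|j _].
  by rewrite oner_eq0.
have := dhomog_nemf_coeff (@Sn_homog k A _ _ (Hg j)) (m:=m); apply => /=.
rewrite mdegMn mdeg1 mul1n /N; apply/eqP => E.
have := ltn_ord j; rewrite -E ltnS => h.
by have := leq_trans (leq_pmull r.+1 pgt0) h; rewrite ltnn.
Qed.
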